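(* For $x\in(0,\pi/2)$ let $A(x)=(\cos x)(\sin x-x\cos x)^{2}(x-\cos x\sin x)$, $B(x)=(x-\cos x\sin x)^{2}(\sin x-x\cos x)$, and $C(x)=x(\sin^{2}x)(-2x^{2}\cos x+x\sin x+\cos x\sin^{2}x)$. Then for every fixed $k\geq 1$ the function $x\mapsto C(x)/(kA(x)+B(x))$ is increasing on $(0,\pi/2)$, and for all $x\in(0,\pi/2)$ $$\frac{12}{5(k+2)}<\frac{C(x)}{kA(x)+B(x)}<1.$$ *)

(* Defs.v *)
From Stdlib Require Import Reals.
Open Scope R_scope.

Definition fA (x : R) : R :=
  cos x * (sin x - x * cos x) ^ 2 * (x - cos x * sin x).
Definition fB (x : R) : R :=
  (x - cos x * sin x) ^ 2 * (sin x - x * cos x).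
Definition fC (x : R) : R :=
  x * (sin x ^ 2) * (- 2 * x ^ 2 * cos x + x * sin x + cos x * sin x ^ 2).

Definition ratio (k x : R) : R := fC x / (k * fA x + fB x).

(* Main.v *)
Require Import Defs.
From Stdlib Require Import Reals Lra Psatz Nsatz.
From Coquelicot Require Import Coquelicot.
Open Scope R_scope.

Ltac posR := repeat match goal with
  | |- 0 <= _ + _ => apply Rplus_le_le_0_compat
  | |- 0 <= _ * _ => apply Rmult_le_pos
  | |- 0 <= _ ^ _ => apply pow_le
  end; try lra.

Definition wsub (r t : R) := 1 - (r/3 + r^2/45 + t*r^3/315).

Definition PN (r w : R) := (1)*r^0*w^1 + (1)*r^0*w^2 + (-2)*r^0*w^3 + (1)*r^1*w^0 + (-2)*r^1*w^1.

Lemma PN_rt (r t : R) : 0 < r -> 0 <= t -> t <= 1 -> 0 < PN r (wsub r t).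
Proof.
  intros Hr Ht0 Ht1.
  assert (E : PN r (wsub r t) = r^2 * (((8/45)*t^0) + ((2/45)*r^1*t^0*(1-t)^1 + (17/315)*r^1*t^1*(1-t)^0 + (1/81)*r^2*t^0*(1-t)^1 + (23/2835)*r^2*t^1*(1-t)^0 + (2/2025)*r^3*t^0*(1-t)^1 + (34/14175)*r^3*t^1*(1-t)^0 + (2/91125)*r^4*t^0*(1-t)^2 + (208/637875)*r^4*t^1*(1-t)^1 + (1133/4465125)*r^4*t^2*(1-t)^0 + (2/212625)*r^5*t^1*(1-t)^1 + (44/1488375)*r^5*t^2*(1-t)^0 + (2/1488375)*r^6*t^2*(1-t)^0 + (2/31255875)*r^7*t^3*(1-t)^0))) by (unfold PN, wsub; field).
  rewrite E. apply Rmult_lt_0_compat; [apply pow_lt; lra|].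
  apply Rplus_lt_le_0_compat; [nra|].
  assert (0 <= 1 - t) by lra. posR.
Qed.

Lemma PN_pos (r w : R) : 0 < r -> 1 - (r/3 + r^2/45 + r^3/315) <= w -> w <= 1 - (r/3 + r^2/45) -> 0 < PN r w.
Proof.
  intros Hr H1 H2.
  assert (Hr3 : 0 < r^3) by (apply pow_lt; lra).
  set (t := (1 - (r/3 + r^2/45) - w) * 315 / r^3).
  assert (Ew : w = wsub r t) by (unfold wsub, t; field; lra).
  rewrite Ew. apply PN_rt; auto.
  - unfold t. apply Rmult_le_pos; [|apply Rlt_le, Rinv_0_lt_compat; lra]. lra.
  - unfold t. apply (Rmult_le_reg_r (r^3)); [lra|]. unfold Rdiv. rewrite Rmult_assoc, Rinv_l; lra.
Qed.

Definition PM (r w : R) := (9)*r^0*w^1 + (-3)*r^0*w^2 + (-6)*r^0*w^3 + (1)*r^1*w^0 + (-6)*r^1*w^1.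

Lemma PM_rt (r t : R) : 0 < r -> 0 <= t -> t <= 1 -> 0 < PM r (wsub r t).
Proof.
  intros Hr Ht0 Ht1.
  assert (E : PM r (wsub r t) = r^3 * (((2/45)*t^0 + (1/21)*t^1) + ((23/675)*r^1*t^0*(1-t)^1 + (41/4725)*r^1*t^1*(1-t)^0 + (2/675)*r^2*t^0*(1-t)^1 + (2/315)*r^2*t^1*(1-t)^0 + (2/30375)*r^3*t^0*(1-t)^2 + (208/212625)*r^3*t^1*(1-t)^1 + (149/212625)*r^3*t^2*(1-t)^0 + (2/70875)*r^4*t^1*(1-t)^1 + (44/496125)*r^4*t^2*(1-t)^0 + (2/496125)*r^5*t^2*(1-t)^0 + (2/10418625)*r^6*t^3*(1-t)^0))) by (unfold PM, wsub; field).
  rewrite E. apply Rmult_lt_0_compat; [apply pow_lt; lra|].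
  apply Rplus_lt_le_0_compat; [nra|].
  assert (0 <= 1 - t) by lra. posR.
Qed.

Lemma PM_pos (r w : R) : 0 < r -> 1 - (r/3 + r^2/45 + r^3/315) <= w -> w <= 1 - (r/3 + r^2/45) -> 0 < PM r w.
Proof.
  intros Hr H1 H2.
  assert (Hr3 : 0 < r^3) by (apply pow_lt; lra).
  set (t := (1 - (r/3 + r^2/45) - w) * 315 / r^3).
  assert (Ew : w = wsub r t) by (unfold wsub, t; field; lra).
  rewrite Ew. apply PM_rt; auto.
  - unfold t. apply Rmult_le_pos; [|apply Rlt_le, Rinv_0_lt_compat; lra]. lra.
  - unfold t. apply (Rmult_le_reg_r (r^3)); [lra|]. unfold Rdiv. rewrite Rmult_assoc, Rinv_l; lra.
Qed.

Definition PH (r w : R) := (-3)*r^0*w^3 + (9)*r^0*w^4 + (-9)*r^0*w^5 + (3)*r^0*w^6 + (-2)*r^1*w^1 + (7)*r^1*w^2 + (-8)*r^1*w^3 + (3)*r^1*w^4 + (-2)*r^2*w^0 + (1)*r^2*w^1 + (1)*r^2*w^2 + (1)*r^3*w^0.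

Lemma PH_rt (r t : R) : 0 < r -> 0 <= t -> t <= 1 -> 0 < PH r (wsub r t).
Proof.
  intros Hr Ht0 Ht1.
  assert (E : PH r (wsub r t) = r^5 * (((28/2025)*t^0 + (-2/189)*t^1) + ((94/30375)*r^1*t^0*(1-t)^1 + (1048/212625)*r^1*t^1*(1-t)^0 + (98/91125)*r^2*t^0*(1-t)^2 + (1408/637875)*r^2*t^1*(1-t)^1 + (4964/4465125)*r^2*t^2*(1-t)^0 + (32/151875)*r^3*t^0*(1-t)^2 + (538/1063125)*r^3*t^1*(1-t)^1 + (344/1063125)*r^3*t^2*(1-t)^0 + (88/4100625)*r^4*t^0*(1-t)^3 + (1108/9568125)*r^4*t^1*(1-t)^2 + (2132/13395375)*r^4*t^2*(1-t)^1 + (91033/1406514375)*r^4*t^3*(1-t)^0 + (8/6834375)*r^5*t^0*(1-t)^3 + (28/2278125)*r^5*t^1*(1-t)^2 + (2557/111628125)*r^5*t^2*(1-t)^1 + (28229/2344190625)*r^5*t^3*(1-t)^0 + (2/61509375)*r^6*t^0*(1-t)^3 + (109/143521875)*r^6*t^1*(1-t)^2 + (856/334884375)*r^6*t^2*(1-t)^1 + (35081/21097715625)*r^6*t^3*(1-t)^0 + (1/2767921875)*r^7*t^0*(1-t)^4 + (478/19375453125)*r^7*t^1*(1-t)^3 + (1364/6458484375)*r^7*t^2*(1-t)^2 + (367222/949397203125)*r^7*t^3*(1-t)^1 + (1334626/6645780421875)*r^7*t^4*(1-t)^0 + (2/6458484375)*r^8*t^1*(1-t)^3 + (38/5023265625)*r^8*t^2*(1-t)^2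 + (2848/105488578125)*r^8*t^3*(1-t)^1 + (41036/2215260140625)*r^8*t^4*(1-t)^0 + (1/9041878125)*r^9*t^2*(1-t)^2 + (74/63293146875)*r^9*t^3*(1-t)^1 + (649/443052028125)*r^9*t^4*(1-t)^0 + (4/189879440625)*r^10*t^3*(1-t)^2 + (146/1329156084375)*r^10*t^4*(1-t)^1 + (799/9304092590625)*r^10*t^5*(1-t)^0 + (1/443052028125)*r^11*t^4*(1-t)^1 + (13/3101364196875)*r^11*t^5*(1-t)^0 + (2/15506820984375)*r^12*t^5*(1-t)^0 + (1/325643240671875)*r^13*t^6*(1-t)^0))) by (unfold PH, wsub; field).
  rewrite E. apply Rmult_lt_0_compat; [apply pow_lt; lra|].
  apply Rplus_lt_le_0_compat; [nra|].
  assert (0 <= 1 - t) by lra. posR.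
Qed.

Lemma PH_pos (r w : R) : 0 < r -> 1 - (r/3 + r^2/45 + r^3/315) <= w -> w <= 1 - (r/3 + r^2/45) -> 0 < PH r w.
Proof.
  intros Hr H1 H2.
  assert (Hr3 : 0 < r^3) by (apply pow_lt; lra).
  set (t := (1 - (r/3 + r^2/45) - w) * 315 / r^3).
  assert (Ew : w = wsub r t) by (unfold wsub, t; field; lra).
  rewrite Ew. apply PH_rt; auto.
  - unfold t. apply Rmult_le_pos; [|apply Rlt_le, Rinv_0_lt_compat; lra]. lra.
  - unfold t. apply (Rmult_le_reg_r (r^3)); [lra|]. unfold Rdiv. rewrite Rmult_assoc, Rinv_l; lra.
Qed.

Definition PG4 (r w : R) := (-2)*r^0*w^0 + (1)*r^0*w^1 + (1)*r^0*w^2 + (1)*r^1*w^0.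

Lemma PG4_rt (r t : R) : 0 < r -> 0 <= t -> t <= 1 -> 0 < PG4 r (wsub r t).
Proof.
  intros Hr Ht0 Ht1.
  assert (E : PG4 r (wsub r t) = r^2 * (((2/45)*t^0) + ((2/135)*r^1*t^0*(1-t)^1 + (1/189)*r^1*t^1*(1-t)^0 + (1/2025)*r^2*t^0*(1-t)^1 + (37/14175)*r^2*t^1*(1-t)^0 + (2/14175)*r^3*t^1*(1-t)^0 + (1/99225)*r^4*t^2*(1-t)^0))) by (unfold PG4, wsub; field).
  rewrite E. apply Rmult_lt_0_compat; [apply pow_lt; lra|].
  apply Rplus_lt_le_0_compat; [nra|].
  assert (0 <= 1 - t) by lra. posR.
Qed.

Lemma PG4_pos (r w : R) : 0 < r -> 1 - (r/3 + r^2/45 + r^3/315) <= w -> w <= 1 - (r/3 + r^2/45) -> 0 < PG4 r w.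
Proof.
  intros Hr H1 H2.
  assert (Hr3 : 0 < r^3) by (apply pow_lt; lra).
  set (t := (1 - (r/3 + r^2/45) - w) * 315 / r^3).
  assert (Ew : w = wsub r t) by (unfold wsub, t; field; lra).
  rewrite Ew. apply PG4_rt; auto.
  - unfold t. apply Rmult_le_pos; [|apply Rlt_le, Rinv_0_lt_compat; lra]. lra.
  - unfold t. apply (Rmult_le_reg_r (r^3)); [lra|]. unfold Rdiv. rewrite Rmult_assoc, Rinv_l; lra.
Qed.

Definition PG5 (r w : R) := (-3)*r^0*w^1 + (3)*r^0*w^2 + (1)*r^1*w^0.

Lemma PG5_rt (r t : R) : 0 < r -> 0 <= t -> t <= 1 -> 0 < PG5 r (wsub r t).
Proof.
  intros Hr Ht0 Ht1.
  assert (E : PG5 r (wsub r t) = r^2 * (((4/15)*t^0) + ((2/45)*r^1*t^0*(1-t)^1 + (11/315)*r^1*t^1*(1-t)^0 + (1/675)*r^2*t^0*(1-t)^1 + (37/4725)*r^2*t^1*(1-t)^0 + (2/4725)*r^3*t^1*(1-t)^0 + (1/33075)*r^4*t^2*(1-t)^0))) by (unfold PG5, wsub; field).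
  rewrite E. apply Rmult_lt_0_compat; [apply pow_lt; lra|].
  apply Rplus_lt_le_0_compat; [nra|].
  assert (0 <= 1 - t) by lra. posR.
Qed.

Lemma PG5_pos (r w : R) : 0 < r -> 1 - (r/3 + r^2/45 + r^3/315) <= w -> w <= 1 - (r/3 + r^2/45) -> 0 < PG5 r w.
Proof.
  intros Hr H1 H2.
  assert (Hr3 : 0 < r^3) by (apply pow_lt; lra).
  set (t := (1 - (r/3 + r^2/45) - w) * 315 / r^3).
  assert (Ew : w = wsub r t) by (unfold wsub, t; field; lra).
  rewrite Ew. apply PG5_rt; auto.
  - unfold t. apply Rmult_le_pos; [|apply Rlt_le, Rinv_0_lt_compat; lra]. lra.
  - unfold t. apply (Rmult_le_reg_r (r^3)); [lra|]. unfold Rdiv. rewrite Rmult_assoc, Rinv_l; lra.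
Qed.

Definition PEp (r w : R) := (-1)*r^0*w^1 + (1)*r^0*w^2 + (1)*r^1*w^0.

Lemma PEp_rt (r t : R) : 0 < r -> 0 <= t -> t <= 1 -> 0 < PEp r (wsub r t).
Proof.
  intros Hr Ht0 Ht1.
  assert (E : PEp r (wsub r t) = r^1 * (((2/3)*t^0) + ((4/45)*r^1*t^0*(1-t)^0 + (2/135)*r^2*t^0*(1-t)^1 + (11/945)*r^2*t^1*(1-t)^0 + (1/2025)*r^3*t^0*(1-t)^1 + (37/14175)*r^3*t^1*(1-t)^0 + (2/14175)*r^4*t^1*(1-t)^0 + (1/99225)*r^5*t^2*(1-t)^0))) by (unfold PEp, wsub; field).
  rewrite E. apply Rmult_lt_0_compat; [apply pow_lt; lra|].
  apply Rplus_lt_le_0_compat; [nra|].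
  assert (0 <= 1 - t) by lra. posR.
Qed.

Lemma PEp_pos (r w : R) : 0 < r -> 1 - (r/3 + r^2/45 + r^3/315) <= w -> w <= 1 - (r/3 + r^2/45) -> 0 < PEp r w.
Proof.
  intros Hr H1 H2.
  assert (Hr3 : 0 < r^3) by (apply pow_lt; lra).
  set (t := (1 - (r/3 + r^2/45) - w) * 315 / r^3).
  assert (Ew : w = wsub r t) by (unfold wsub, t; field; lra).
  rewrite Ew. apply PEp_rt; auto.
  - unfold t. apply Rmult_le_pos; [|apply Rlt_le, Rinv_0_lt_compat; lra]. lra.
  - unfold t. apply (Rmult_le_reg_r (r^3)); [lra|]. unfold Rdiv. rewrite Rmult_assoc, Rinv_l; lra.
Qed.

Lemma INR_fact_S n : INR (Factorial.fact (S n)) = INR (S n) * INR (Factorial.fact n).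
Proof. rewrite fact_simpl, mult_INR. reflexivity. Qed.

Lemma sin_approx3 a : sin_approx a 3 = a - a^3/6 + a^5/120 - a^7/5040.
Proof.
  unfold sin_approx, sin_term. cbn [sum_f_R0 Nat.mul Nat.add].
  repeat rewrite INR_fact_S. cbn [Factorial.fact]. repeat rewrite S_INR. simpl INR. field.
Qed.
Lemma sin_approx4 a : sin_approx a 4 = a - a^3/6 + a^5/120 - a^7/5040 + a^9/362880.
Proof.
  unfold sin_approx, sin_term. cbn [sum_f_R0 Nat.mul Nat.add].
  repeat rewrite INR_fact_S. cbn [Factorial.fact]. repeat rewrite S_INR. simpl INR. field.
Qed.
Lemma cos_approx3 a : cos_approx a 3 = 1 - a^2/2 + a^4/24 - a^6/720.
Proof.
  unfold cos_approx, cos_term. cbn [sum_f_R0 Nat.mul Nat.add].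
  repeat rewrite INR_fact_S. cbn [Factorial.fact]. repeat rewrite S_INR. simpl INR. field.
Qed.
Lemma cos_approx4 a : cos_approx a 4 = 1 - a^2/2 + a^4/24 - a^6/720 + a^8/40320.
Proof.
  unfold cos_approx, cos_term. cbn [sum_f_R0 Nat.mul Nat.add].
  repeat rewrite INR_fact_S. cbn [Factorial.fact]. repeat rewrite S_INR. simpl INR. field.
Qed.

Lemma PI2_ub : PI / 2 < 1.571.
Proof.
  destruct (Rlt_or_le (PI/2) 1.571) as [H|H]; auto. exfalso.
  assert (Hc : 0 <= cos 1.571) by (apply cos_ge_0; lra).
  destruct (cos_bound 1.571 1) as [_ Hb]; try lra.
  replace (2 * (1 + 1))%nat with 4%nat in Hb by reflexivity.
  rewrite cos_approx4 in Hb. lra.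
Qed.

Lemma sin_b x : 0 <= x -> x <= PI ->
  x - x^3/6 + x^5/120 - x^7/5040 <= sin x <= x - x^3/6 + x^5/120 - x^7/5040 + x^9/362880.
Proof.
  intros. destruct (sin_bound x 1) as [H1 H2]; auto.
  replace (2 * 1 + 1)%nat with 3%nat in H1 by reflexivity.
  replace (2 * (1 + 1))%nat with 4%nat in H2 by reflexivity.
  rewrite sin_approx3 in H1. rewrite sin_approx4 in H2. lra.
Qed.

Lemma cos_b x : - PI / 2 <= x -> x <= PI / 2 ->
  1 - x^2/2 + x^4/24 - x^6/720 <= cos x <= 1 - x^2/2 + x^4/24 - x^6/720 + x^8/40320.
Proof.
  intros. destruct (cos_bound x 1) as [H1 H2]; auto.
  replace (2 * 1 + 1)%nat with 3%nat in H1 by reflexivity.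
  replace (2 * (1 + 1))%nat with 4%nat in H2 by reflexivity.
  rewrite cos_approx3 in H1. rewrite cos_approx4 in H2. lra.
Qed.

Lemma B1 x : 0 < x -> x < PI/2 ->
  x * cos x <= sin x * (1 - (x^2/3 + (x^2)^2/45)).
Proof.
  intros H0 H1. pose proof PI2_ub. pose proof PI_RGT_0.
  destruct (sin_b x) as [Hs _]; try lra.
  destruct (cos_b x) as [_ Hc]; try lra.
  assert (Hr : x^2 < 2.5) by nra.
  assert (Hr0 : 0 < x^2) by nra.
  assert (HL : 0 < 1 - (x^2/3 + (x^2)^2/45)) by nra.
  assert (E : (x - x^3/6 + x^5/120 - x^7/5040) * (1 - (x^2/3 + (x^2)^2/45)) - x * (1 - x^2/2 + x^4/24 - x^6/720 + x^8/40320)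
     = x * (x^2)^3 * (2/945 - 29/201600 * x^2 + 1/226800 * (x^2)^2)) by field.
  assert (Hq : 0 < 2/945 - 29/201600 * x^2 + 1/226800 * (x^2)^2) by nra.
  assert (0 < x * (x^2)^3 * (2/945 - 29/201600 * x^2 + 1/226800 * (x^2)^2)).
  { apply Rmult_lt_0_compat; [|lra]. apply Rmult_lt_0_compat; [lra|]. apply pow_lt; lra. }
  nra.
Qed.

Lemma B2 x : 0 < x -> x < PI/2 ->
  sin x * (1 - (x^2/3 + (x^2)^2/45 + (x^2)^3/315)) <= x * cos x.
Proof.
  intros H0 H1. pose proof PI2_ub. pose proof PI_RGT_0.
  assert (Hs0 : 0 < sin x) by (apply sin_gt_0; lra).
  assert (Hc0 : 0 < cos x) by (apply cos_gt_0; lra).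
  destruct (Rle_or_lt (1 - (x^2/3 + (x^2)^2/45 + (x^2)^3/315)) 0) as [HE|HE].
  { assert (0 < x * cos x) by nra. nra. }
  destruct (sin_b x) as [_ Hs]; try lra.
  destruct (cos_b x) as [Hc _]; try lra.
  assert (Hr : x^2 < 2.5) by nra.
  assert (Hr0 : 0 < x^2) by nra.
  assert (E : x * (1 - x^2/2 + x^4/24 - x^6/720) - (x - x^3/6 + x^5/120 - x^7/5040 + x^9/362880) * (1 - (x^2/3 + (x^2)^2/45 + (x^2)^3/315))
     = x * (x^2)^3 * (1/945 - 107/259200 * x^2 + 5/217728 * (x^2)^2 - 13/22861440 * (x^2)^3 + 1/114307200 * (x^2)^4)) by field.
  assert (Hq : 0 < 1/945 - 107/259200 * x^2 + 5/217728 * (x^2)^2 - 13/22861440 * (x^2)^3 + 1/114307200 * (x^2)^4).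
  { set (r := x^2) in *. assert (r <= 2.47) by nra. nra. }
  assert (0 < x * (x^2)^3 * (1/945 - 107/259200 * x^2 + 5/217728 * (x^2)^2 - 13/22861440 * (x^2)^3 + 1/114307200 * (x^2)^4)).
  { apply Rmult_lt_0_compat; [|lra]. apply Rmult_lt_0_compat; [lra|]. apply pow_lt; lra. }
  nra.
Qed.

Definition uu x := sin x - x * cos x.
Definition vv x := x - cos x * sin x.
Definition WW x := -2*x^2*cos x + x*sin x + cos x*sin x^2.
Definition PP x := vv x^3 + 2*vv x*uu x^2 - 4*x*sin x^2*uu x^2.

Lemma pos_of_mul a b : 0 < a -> 0 < a*b -> 0 < b.
Proof. intros. destruct (Rle_or_lt b 0); auto. nra. Qed.

Lemma pointwise x : 0 < x -> x < PI/2 ->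
  0 < sin x /\ 0 < cos x /\ 0 < uu x /\ 0 < vv x /\ 0 < WW x /\ 0 < PP x /\
  4*(uu x*vv x) < 5*WW x /\ WW x < uu x*vv x /\ 3*cos x*uu x < x*sin x^2.
Proof.
  intros H0 H1. pose proof PI2_ub. pose proof PI_RGT_0.
  assert (Hs : 0 < sin x) by (apply sin_gt_0; lra).
  assert (Hc : 0 < cos x) by (apply cos_gt_0; lra).
  pose proof (B1 x H0 H1) as HB1. pose proof (B2 x H0 H1) as HB2.
  pose proof (sin2_cos2 x) as Hsc. unfold Rsqr in Hsc.
  unfold PP, WW, uu, vv.
  set (s := sin x) in *. set (c := cos x) in *.
  set (w := x*c/s).
  assert (Hw : x*c = w*s) by (unfold w; field; lra).
  assert (Hr : 0 < x^2) by nra.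
  assert (Hw1 : w <= 1 - (x^2/3 + (x^2)^2/45)).
  { apply (Rmult_le_reg_r s); auto. rewrite <- Hw. lra. }
  assert (Hw2 : 1 - (x^2/3 + (x^2)^2/45 + (x^2)^3/315) <= w).
  { apply (Rmult_le_reg_r s); auto. rewrite <- Hw. lra. }
  assert (Hw0 : 0 < w) by (unfold w; apply Rdiv_lt_0_compat; nra).
  clearbody w s c.
  pose proof (PN_pos _ _ Hr Hw2 Hw1) as HN.
  pose proof (PM_pos _ _ Hr Hw2 Hw1) as HM.
  pose proof (PH_pos _ _ Hr Hw2 Hw1) as HH.
  pose proof (PG4_pos _ _ Hr Hw2 Hw1) as HG4.
  pose proof (PG5_pos _ _ Hr Hw2 Hw1) as HG5.
  pose proof (PEp_pos _ _ Hr Hw2 Hw1) as HEp.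
  assert (Hrho : 0 < x^2 + w^2) by nra.
  assert (I1 : x * (-2*x^2*c + x*s + c*s^2) = s^3 * PN (x^2) w)
    by (unfold PN; simpl; clear -Hsc Hw; nsatz).
  assert (I2 : s - x*c = s*(1-w)) by (rewrite Hw; ring).
  assert (I3 : (x - c*s)*(x^2+w^2) = x * PEp (x^2) w)
    by (unfold PEp; simpl; clear -Hsc Hw; nsatz).
  assert (Hu : 0 < s - x*c) by (rewrite I2; assert (1 - w > 0) by nra; nra).
  assert (Hv : 0 < x - c*s).
  { apply (pos_of_mul (x^2+w^2)); auto. rewrite Rmult_comm, I3. nra. }
  assert (HW : 0 < -2*x^2*c + x*s + c*s^2).
  { apply (pos_of_mul x); auto. rewrite I1. apply Rmult_lt_0_compat; auto. apply pow_lt; lra. }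
  set (u := s - x*c) in *. set (v := x - c*s) in *.
  set (W := -2*x^2*c + x*s + c*s^2) in *.
  assert (I4 : (v^3 + 2*v*u^2 - 4*x*s^2*u^2) * (x^2+w^2)^3 = x^3 * PH (x^2) w)
    by (unfold PH, u, v; simpl; clear -Hsc Hw; nsatz).
  assert (I5 : s*(5*W - 4*(u*v))*(x^2+w^2)^2 = x^3 * PM (x^2) w)
    by (unfold PM, u, v, W; simpl; clear -Hsc Hw; nsatz).
  assert (I6 : s*(u*v - W)*(x^2+w^2)^2 = x^3 * w * PG4 (x^2) w)
    by (unfold PG4, u, v, W; simpl; clear -Hsc Hw; nsatz).
  assert (I7 : (x*s^2 - 3*c*u)*(x^2+w^2) = x * PG5 (x^2) w)
    by (unfold PG5, u; simpl; clear -Hsc Hw; nsatz).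
  assert (Hx3 : 0 < x^3) by (apply pow_lt; lra).
  assert (Hrho2 : 0 < (x^2+w^2)^2) by (apply pow_lt; lra).
  assert (Hrho3 : 0 < (x^2+w^2)^3) by (apply pow_lt; lra).
  repeat split; auto.
  - apply (pos_of_mul ((x^2+w^2)^3)); auto. rewrite Rmult_comm, I4. nra.
  - assert (0 < 5*W - 4*(u*v)); [|lra].
    apply (pos_of_mul (s*(x^2+w^2)^2)); [nra|].
    replace (s * (x ^ 2 + w ^ 2) ^ 2 * (5 * W - 4 * (u * v))) with (s*(5*W - 4*(u*v))*(x^2+w^2)^2) by ring.
    rewrite I5. nra.
  - assert (0 < u*v - W); [|lra].
    apply (pos_of_mul (s*(x^2+w^2)^2)); [nra|].
    replace (s * (x ^ 2 + w ^ 2) ^ 2 * (u*v - W)) with (s*(u*v - W)*(x^2+w^2)^2) by ring.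
    rewrite I6. assert (0 < x^3*w) by nra. nra.
  - assert (0 < x*s^2 - 3*c*u); [|lra].
    apply (pos_of_mul (x^2+w^2)); auto. rewrite Rmult_comm, I7. nra.
Qed.

Definition FF y := cos y * (sin y - y*cos y) / (y * sin y ^ 2).
Definition GG y := 2*y/(y - cos y*sin y) - sin y/(sin y - y*cos y).
Definition FFd y := - WW y / (y^2 * sin y^3).
Definition GGd y := PP y / (uu y^2 * vv y^2).

Ltac nz := let H := fresh in intro H;
  repeat match type of H with
  | _ * _ = 0 => apply Rmult_integral in H; destruct H as [H|H]
  end; lra.

Lemma FF_deriv y : 0 < y -> y < PI/2 -> derivable_pt_lim FF y (FFd y).
Proof.
  intros H0 H1. destruct (pointwise y H0 H1) as (Hs & Hc & Hu & Hv & _).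
  unfold uu, vv in Hu, Hv.
  pose proof (sin2_cos2 y) as Hsc. unfold Rsqr in Hsc.
  apply is_derive_Reals. unfold FF, FFd, WW.
  auto_derive.
  - repeat split; nz.
  - set (s := sin y) in *. set (c := cos y) in *. clearbody s c.
    field_simplify_eq; [| split; nz].
    simpl. clear -Hsc. nsatz.
Qed.

Lemma GG_deriv y : 0 < y -> y < PI/2 -> derivable_pt_lim GG y (GGd y).
Proof.
  intros H0 H1. destruct (pointwise y H0 H1) as (Hs & Hc & Hu & Hv & _).
  unfold uu, vv in Hu, Hv.
  pose proof (sin2_cos2 y) as Hsc. unfold Rsqr in Hsc.
  apply is_derive_Reals. unfold GG, GGd, PP, uu, vv.
  auto_derive.
  - repeat split; nz.
  - set (s := sin y) in *. set (c := cos y) in *. clearbody s c.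
    field_simplify_eq; [| repeat split; nz].
    simpl. clear -Hsc. nsatz.
Qed.

Lemma FF_decr a b : 0 < a -> a < b -> b < PI/2 -> FF b < FF a.
Proof.
  intros Ha Hab Hb.
  destruct (MVT_cor2 FF FFd a b) as [z [E Hz]]; auto.
  { intros z Hz. apply FF_deriv; lra. }
  destruct (pointwise z) as (Hs & _ & _ & _ & HW & _); try lra.
  assert (0 < z^2 * sin z^3) by (apply Rmult_lt_0_compat; apply pow_lt; lra).
  assert (0 < WW z / (z^2 * sin z^3)) by (apply Rdiv_lt_0_compat; auto).
  assert (FFd z < 0).
  { unfold FFd. replace (- WW z / (z^2*sin z^3)) with (-(WW z / (z^2*sin z^3))) by (unfold Rdiv; ring). lra. }
  assert (FFd z * (b - a) < 0) by (apply Rmult_neg_pos; lra) || nra.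
  lra.
Qed.

Lemma GG_incr a b : 0 < a -> a < b -> b < PI/2 -> GG a < GG b.
Proof.
  intros Ha Hab Hb.
  destruct (MVT_cor2 GG GGd a b) as [z [E Hz]]; auto.
  { intros z Hz. apply GG_deriv; lra. }
  destruct (pointwise z) as (Hs & _ & Hu & Hv & _ & HP & _); try lra.
  assert (0 < uu z^2 * vv z^2) by (apply Rmult_lt_0_compat; apply pow_lt; lra).
  assert (0 < GGd z) by (apply Rdiv_lt_0_compat; auto).
  assert (0 < GGd z * (b - a)) by (apply Rmult_lt_0_compat; lra).
  lra.
Qed.

Lemma cross k x : 0 < x -> x < PI/2 ->
  fC x * (1 + (k-1) * FF x) = GG x * (k * fA x + fB x).
Proof.
  intros H0 H1. destruct (pointwise x H0 H1) as (Hs & Hc & Hu & Hv & _).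
  unfold uu, vv in Hu, Hv.
  pose proof (sin2_cos2 x) as Hsc. unfold Rsqr in Hsc.
  unfold fC, FF, GG, fA, fB.
  set (s := sin x) in *. set (c := cos x) in *. clearbody s c.
  field_simplify_eq; [| repeat split; nz].
  simpl. clear -Hsc. nsatz.
Qed.

Lemma ratio_eq k x : 1 <= k -> 0 < x -> x < PI/2 ->
  ratio k x = GG x / (1 + (k-1) * FF x) /\ 4/5 < GG x < 1 /\ 0 < FF x < 1/3.
Proof.
  intros hk H0 H1. destruct (pointwise x H0 H1) as (Hs & Hc & Hu & Hv & HW & _ & Hm & Hg1 & Hf).
  assert (HA : 0 < fA x).
  { unfold fA. unfold uu, vv in Hu, Hv.
    apply Rmult_lt_0_compat; [apply Rmult_lt_0_compat|]; auto; try lra. apply pow_lt; lra. }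
  assert (HB : 0 < fB x).
  { unfold fB. unfold uu, vv in Hu, Hv.
    apply Rmult_lt_0_compat; auto; try lra. apply pow_lt; lra. }
  assert (Hs2 : 0 < x * sin x ^ 2) by (apply Rmult_lt_0_compat; [lra| apply pow_lt; lra]).
  assert (HF : 0 < FF x < 1/3).
  { unfold FF. split.
    - apply Rdiv_lt_0_compat; auto. unfold uu in Hu. nra.
    - apply (Rmult_lt_reg_r (x * sin x ^ 2)); auto. unfold Rdiv. rewrite Rmult_assoc, Rinv_l by lra.
      unfold uu in Hf. lra. }
  assert (HG : GG x = WW x / (uu x * vv x)).
  { unfold GG, WW, uu, vv. unfold uu, vv in Hu, Hv. field. lra. }
  assert (Huv : 0 < uu x * vv x) by (apply Rmult_lt_0_compat; auto).
  assert (HGb : 4/5 < GG x < 1).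
  { rewrite HG. split.
    - apply (Rmult_lt_reg_r (uu x * vv x)); auto. replace (WW x / (uu x * vv x) * (uu x * vv x)) with (WW x) by (field; lra). lra.
    - apply (Rmult_lt_reg_r (uu x * vv x)); auto. replace (WW x / (uu x * vv x) * (uu x * vv x)) with (WW x) by (field; lra). lra. }
  split; [|split; auto].
  assert (HD : 0 < 1 + (k-1) * FF x) by nra.
  assert (HD2 : 0 < k * fA x + fB x) by nra.
  pose proof (cross k x H0 H1) as Ecr.
  unfold ratio. apply (Rmult_eq_reg_r ((k * fA x + fB x) * (1 + (k-1) * FF x))); [|nra].
  replace (fC x / (k * fA x + fB x) * ((k * fA x + fB x) * (1 + (k - 1) * FF x))) with (fC x * (1 + (k - 1) * FF x)) by (field; lra).
  replace (GG x / (1 + (k - 1) * FF x) * ((k * fA x + fB x) * (1 + (k - 1) * FF x))) with (GG x * (k * fA x + fB x)) by (field; lra).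
  exact Ecr.
Qed.

Theorem lemma2p1 (k : R) (hk : 1 <= k) :
  (forall x y : R, 0 < x -> x < y -> y < PI / 2 -> ratio k x < ratio k y) /\
  (forall x : R, 0 < x -> x < PI / 2 ->
     12 / (5 * (k + 2)) < ratio k x /\ ratio k x < 1).
Proof.
  split.
  - intros x y Hx Hxy Hy.
    destruct (ratio_eq k x hk Hx) as (Ex & Gx & Fx); [lra|].
    destruct (ratio_eq k y hk) as (Ey & Gy & Fy); [lra|lra|].
    rewrite Ex, Ey.
    pose proof (GG_incr x y Hx Hxy Hy). pose proof (FF_decr x y Hx Hxy Hy).
    assert (HDx : 0 < 1 + (k-1) * FF x) by nra.
    assert (HDy : 0 < 1 + (k-1) * FF y) by nra.
    assert (HDle : 1 + (k-1) * FF y <= 1 + (k-1) * FF x) by nra.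
    apply (Rmult_lt_reg_r ((1 + (k-1) * FF x) * (1 + (k-1) * FF y))); [nra|].
    replace (GG x / (1 + (k - 1) * FF x) * ((1 + (k - 1) * FF x) * (1 + (k - 1) * FF y)))
      with (GG x * (1 + (k - 1) * FF y)) by (field; lra).
    replace (GG y / (1 + (k - 1) * FF y) * ((1 + (k - 1) * FF x) * (1 + (k - 1) * FF y)))
      with (GG y * (1 + (k - 1) * FF x)) by (field; lra).
    nra.
  - intros x Hx Hx2.
    destruct (ratio_eq k x hk Hx Hx2) as (Ex & Gx & Fx).
    rewrite Ex.
    assert (HD1 : 1 <= 1 + (k-1) * FF x) by nra.
    assert (HD2 : 1 + (k-1) * FF x <= (k+2)/3) by nra.
    split.
    + apply (Rmult_lt_reg_r (5 * (k + 2) * (1 + (k-1) * FF x))); [nra|].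
      replace (12 / (5 * (k + 2)) * (5 * (k + 2) * (1 + (k - 1) * FF x))) with (12 * (1 + (k - 1) * FF x)) by (field; lra).
      replace (GG x / (1 + (k - 1) * FF x) * (5 * (k + 2) * (1 + (k - 1) * FF x))) with (GG x * (5 * (k + 2))) by (field; lra).
      nra.
    + apply (Rmult_lt_reg_r (1 + (k-1) * FF x)); [lra|].
      replace (GG x / (1 + (k - 1) * FF x) * (1 + (k - 1) * FF x)) with (GG x) by (field; lra).
      nra.
Qed.
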